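(* Fix $n,d$ and $J=\{j_1<\cdots<j_\ell\}\subseteq[n]$. There exists a path $C\in\mathcal{P}(n,d)$ with $\mathrm{st}(C)=J$ if and only if $j_k\geq 2k$ for all $1\le k\le\ell$ and $\ell\le d\le n-\ell$. Moreover, in this case such a path is unique.
   Context: $\mathcal{P}(n,d)$ is the set of words $C=C_1\cdots C_n$ in letters $\mathbf{e}$ (east step) and $\mathbf{n}$ (north step) with exactly $d$ letters $\mathbf{e}$. For $C\in\mathcal{P}(n,d)$: scan positions left to right and mark position $i$ with $C_i=\mathbf{e}$ if the number of $j<i$ with $C_j=\mathbf{n}$ equals the number of $j<i$ with $C_j=\mathbf{e}$ that are unmarked; $\mathrm{st}(C)$ is the set of unmarked positions $i$ with $C_i=\mathbf{e}$. *)

(* Defs.v *)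
From mathcomp Require Import all_boot.
Set Implicit Arguments. Unset Strict Implicit. Unset Printing Implicit Defensive.

(* A lattice word: [true] = east step e, [false] = north step n. *)
Definition path_word := seq bool.

Definition inP (n d : nat) (C : path_word) : bool :=
  (size C == n) && (count id C == d).

(* Marking scan.  [nn] = number of north steps seen so far,
   [ue] = number of unmarked east steps seen so far. *)
Fixpoint mark_aux (nn ue : nat) (C : path_word) : seq bool :=
  match C with
  | [::] => [::]
  | c :: C' =>
      if c then
        (if nn == ue then true :: mark_aux nn ue C'
         else false :: mark_aux nn ue.+1 C')
      else false :: mark_aux nn.+1 ue C'
  end.

Definition marks (C : path_word) : seq bool := mark_aux 0 0 C.

Definition st (C : path_word) : seq nat :=
  [seq i.+1 | i <- iota 0 (size C) & nth false C i && ~~ nth false (marks C) i].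

(* Main.v *)
Require Import Defs.
From mathcomp Require Import all_boot.
From mathcomp Require Import zify.

Fixpoint fw (h : nat) (C : seq bool) : seq bool :=
  match C with
  | [::] => [::]
  | c :: C' => if c then (if h is h'.+1 then true :: fw h' C' else false :: fw 0 C')
               else false :: fw h.+1 C'
  end.

Fixpoint feas (h : nat) (b : seq bool) : bool :=
  match b with
  | [::] => true
  | x :: b' => if x then (if h is h'.+1 then feas h' b' else false) else feas h.+1 b'
  end.

Fixpoint sp (b : seq bool) : seq nat :=
  match b with
  | [::] => [::]
  | x :: b' => if x then 1 :: map succn (sp b') else map succn (sp b')
  end.

Lemma fw_size h C : size (fw h C) = size C.
Proof. by elim: C h => [|[] C IH] [|h] //=; rewrite IH. Qed.

Lemma fw_marks C nn ue : ue <= nn -> forall i,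
  nth false (fw (nn - ue) C) i = nth false C i && ~~ nth false (mark_aux nn ue C) i.
Proof.
elim: C nn ue => [|c C IH] nn ue Hle i /=; first by rewrite !nth_nil.
case: c.
  case: eqP => [<-|Hne].
    rewrite subnn /=; case: i => [|i] //=; rewrite -(subnn nn); exact: IH.
  have -> : nn - ue = (nn - ue.+1).+1 by lia.
  case: i => [|i] //=; apply: IH; lia.
have -> : (nn - ue).+1 = nn.+1 - ue by lia.
case: i => [|i] //=; apply: IH; lia.
Qed.

Lemma mem_map_succn (L : seq nat) j :
  (j \in map succn L) = if j is j'.+1 then j' \in L else false.
Proof.
case: j => [|j]; first by apply/mapP => -[].
exact: (mem_map succn_inj).
Qed.

Lemma mem_sp b j : (j \in sp b) = (0 < j <= size b) && nth false b j.-1.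
Proof.
elim: b j => [|x b IH] j /=; first by rewrite nth_nil andbF.
case: x; rewrite ?in_cons mem_map_succn; case: j => [|[|j]] //=; rewrite IH //.
Qed.

Lemma size_sp b : size (sp b) = count id b.
Proof. by elim: b => [|[] b IH] //=; rewrite size_map IH. Qed.

Lemma sp_inj b1 b2 : size b1 = size b2 -> sp b1 = sp b2 -> b1 = b2.
Proof.
move=> Hs He; apply: (eq_from_nth (x0 := false) Hs) => i Hi.
have := mem_sp b1 i.+1; have := mem_sp b2 i.+1; rewrite He /= -Hs Hi /= => -> -> //.
Qed.

Lemma sp_sorted b : sorted ltn (sp b).
Proof.
elim: b => [|[] b IH] //=.
  rewrite path_sortedE; last exact: ltn_trans.
  rewrite sorted_map /=; apply/andP; split; last first.
    by apply: sub_sorted IH => x y.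
  apply/allP => x /mapP [y Hy ->]; move: Hy; rewrite mem_sp; case: y => //.
by rewrite sorted_map; apply: sub_sorted IH => x y.
Qed.

Lemma sp_iota b : [seq i.+1 | i <- iota 0 (size b) & nth false b i] = sp b.
Proof.
elim: b => [|x b IH] //=.
rewrite -[in iota 1 _](addn0 1) iotaDl.
have E : [seq 1 + i | i <- iota 0 (size b)] = map succn (iota 0 (size b)) by [].
rewrite E filter_map /=.
have -> : [seq i <- iota 0 (size b) | preim succn (nth false (x :: b)) i]
   = [seq i <- iota 0 (size b) | nth false b i] by [].
by case: x => //=; rewrite -IH -map_comp.
Qed.

Lemma st_fw C : st C = sp (fw 0 C).
Proof.
rewrite /st -sp_iota fw_size; congr map; apply: eq_filter => i.
by rewrite /marks -(@fw_marks C 0 0 (leqnn 0) i).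
Qed.
Lemma fw_nil h C : fw h C = [::] -> C = [::].
Proof. by case: C => [|[] C] //; case: h. Qed.

Lemma fw_count_lt C1 C2 h1 h2 : h1 < h2 -> fw h1 C1 = fw h2 C2 ->
  count id C2 <= count id C1.
Proof.
elim: C1 C2 h1 h2 => [|c1 C1 IH] C2 h1 h2 Hlt /=; move: Hlt.
  by move=> _ /esym/fw_nil->.
case: C2 => [|c2 C2] //=.
case: c1; case: c2; case: h1 => [|h1]; case: h2 => [|h2] //= Hlt' [] E;
  try (have := IH _ _ _ _ E; lia).
Qed.

Lemma fw_uniq C1 C2 h : fw h C1 = fw h C2 -> count id C1 = count id C2 -> C1 = C2.
Proof.
elim: C1 C2 h => [|c1 C1 IH] C2 h /=.
  by move/esym/fw_nil->.
case: C2 => [|c2 C2] //=; first by case: c1; case: h.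
case: c1; case: c2; case: h => [|h] //= [] E Hc; try (congr cons; apply: IH E _; lia).
- have := @fw_count_lt _ _ _ _ (ltnSn 0) E; lia.
- have := @fw_count_lt _ _ _ _ (ltnSn 0) (esym E); lia.
Qed.

Lemma feas_mono h b : feas h b -> feas h.+1 b.
Proof.
elim: b h => [|[] b IH] [|h] //=; try exact: IH.
Qed.

Lemma fw_nec C h : feas h (fw h C) /\
  count id (fw h C) <= count id C <= size C - count id (fw h C) + h.
Proof.
elim: C h => [|c C IH] h /=; first by [].
have Hs h' : count id (fw h' C) <= size C by rewrite -(fw_size h') count_size.
have Hs2 := count_size id C.
case: c; case: h => [|h] /=.
- have [F Hc] := IH 0; have := Hs 0; split; [exact: feas_mono | lia].
- have [F Hc] := IH h; have := Hs h; split; [done | lia].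
- have [F Hc] := IH 1; have := Hs 1; split; [done | lia].
- have [F Hc] := IH h.+2; have := Hs h.+2; split; [done | lia].
Qed.

Lemma fw_exA h b : feas h b -> exists C, [/\ size C = size b, count id C = count id b & fw h C = b].
Proof.
elim: b h => [|x b IH] h /=; first by exists [::].
case: x.
  case: h => [|h] // /IH [C [H1 H2 H3]].
  by exists (true :: C); rewrite /= H1 H2 H3.
move=> /IH [C [H1 H2 H3]].
by exists (false :: C); rewrite /= H1 H2 H3.
Qed.


Fixpoint fin h C := match C with [::] => h
  | c :: C' => if c then (if h is h'.+1 then fin h' C' else fin 0 C') else fin h.+1 C' end.
Fixpoint minh h C := match C with [::] => h
  | c :: C' => minn h (if c then (if h is h'.+1 then minh h' C' else minh 0 C') else minh h.+1 C') end.

Lemma fin_eq h C : fin h C + count id (fw h C) = h + (size C - count id C).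
Proof.
elim: C h => [|c C IH] h /=; first lia.
have Hs := count_size id C.
case: c; case: h => [|h] /=; [move: (IH 0) | move: (IH h) | move: (IH 1) | move: (IH h.+2)]; lia.
Qed.

Lemma minh0 C : minh 0 C = 0.
Proof. by case: C => [|c C] //=; rewrite min0n. Qed.

Lemma fw_shift C h : 0 < minh h.+1 C -> fw h C = fw h.+1 C.
Proof.
elim: C h => [|c C IH] h //=.
case: c => H.
  case: h H => [|h] H; first by rewrite minh0 minnC /= in H.
  by rewrite (IH h) //; move: H; rewrite leq_min => /andP [].
by rewrite (IH h.+1) //; move: H; rewrite leq_min => /andP [].
Qed.

Lemma minnS0 k m : minn k.+1 m = 0 -> m = 0.
Proof. lia. Qed.

Lemma shift_ex C h : 0 < fin h C -> minh h C = 0 ->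
  exists C', [/\ size C' = size C, count id C' = (count id C).+1 & fw h C' = fw h C].
Proof.
elim: C h => [|c C IH] h /=; first by move=> + H; rewrite H.
case: c; case: h => [|h] Hf.
- move=> _; have [X [X1 X2 X3]] := IH 0 Hf (minh0 C).
  by exists (true :: X); rewrite /= X1 X2 X3.
- move=> /minnS0 Hm; have [X [X1 X2 X3]] := IH h Hf Hm.
  by exists (true :: X); rewrite /= X1 X2 X3.
- move=> _; case: (posnP (minh 1 C)) => Hm.
    have [X [X1 X2 X3]] := IH 1 Hf Hm.
    by exists (false :: X); rewrite /= X1 X2 X3.
  by exists (true :: C); rewrite /= (@fw_shift C 0 Hm).
- move=> /minnS0 Hm; have [X [X1 X2 X3]] := IH h.+2 Hf Hm.
  by exists (false :: X); rewrite /= X1 X2 X3.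
Qed.

Lemma exist_d k b : feas 0 b -> count id b + k <= size b - count id b ->
  exists C, [/\ size C = size b, count id C = count id b + k & fw 0 C = b].
Proof.
move=> F; elim: k => [|k IH] H.
  by have [C [C1 C2 C3]] := (@fw_exA 0 b F); exists C; rewrite addn0.
have [C [C1 C2 C3]] := IH ltac:(lia).
have Hf := fin_eq 0 C.
rewrite C3 C1 C2 in Hf.
have [X [X1 X2 X3]] := @shift_ex C 0 ltac:(lia) (minh0 C).
by exists X; rewrite X1 X2 X3 C1 C2 C3 addnS.
Qed.

Lemma feas_cond h b : feas h b <->
  (forall k, k < size (sp b) -> 2 * k.+1 <= nth 0 (sp b) k + h).
Proof.
elim: b h => [|x b IH] h /=; first by [].
case: x.
  case: h => [|h].
    split => // /(_ 0 isT); rewrite /=; lia.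
  rewrite IH; split => H k.
    rewrite /= size_map; case: k => [|k] Hk /=; first lia.
    rewrite (nth_map 0) //; have := H k Hk; lia.
  move=> Hk; have := H k.+1; rewrite [size (_ :: _)]/= size_map ltnS [nth _ _ k.+1]/= (nth_map 0) // => /(_ Hk); lia.
rewrite IH; split => H k.
  rewrite size_map => Hk; rewrite (nth_map 0) //; have := H k Hk; lia.
move=> Hk; have := H k; rewrite size_map (nth_map 0) // => /(_ Hk); lia.
Qed.

Theorem proposition4p14 (n d : nat) (J : seq nat)
  (HJs : sorted ltn J) (HJn : all (fun j => (1 <= j <= n)%N) J) :
  ((exists C : path_word, inP n d C /\ st C = J) <->
   ((forall k, (k < size J)%N -> (2 * k.+1 <= nth 0 J k)%N) /\
    (size J <= d <= n - size J)%N)) /\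
  (forall C1 C2 : path_word, inP n d C1 -> inP n d C2 ->
     st C1 = J -> st C2 = J -> C1 = C2).
Proof.
pose B := mkseq (fun i => i.+1 \in J) n.
have sB : size B = n by rewrite size_mkseq.
have spB : sp B = J.
  apply: (irr_sorted_eq ltn_trans ltnn (sp_sorted B) HJs) => j.
  rewrite mem_sp sB; case: (boolP (0 < j <= n)) => Hj /=.
    rewrite nth_mkseq; last lia.
    by rewrite prednK //; case/andP: Hj.
  apply/esym/negbTE/negP => /(allP HJn) /= Hj'.
  by move: Hj; rewrite /=; case/andP: Hj' => -> ->.
have cB : count id B = size J by rewrite -size_sp spB.
have key : forall C, size C = n -> (st C = J <-> fw 0 C = B).
  move=> C HC; rewrite st_fw; split; last by move=> ->.
  by rewrite -spB; apply: sp_inj; rewrite fw_size sB.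
have inPE : forall C, inP n d C -> size C = n /\ count id C = d.
  by move=> C /andP [/eqP -> /eqP ->].
split; first split.
- move=> [C [/inPE [HC1 HC2] HS]].
  have E := (key C HC1).1 HS.
  have [F Hc] := fw_nec C 0.
  rewrite E cB HC1 HC2 in Hc; rewrite E in F.
  move/feas_cond: F; rewrite spB => F.
  split; last lia.
  by move=> k /F; rewrite addn0.
- move=> [Hk Hd].
  have F : feas 0 B by apply/feas_cond; rewrite spB => k /Hk; rewrite addn0.
  have [C [C1 C2 C3]] := @exist_d (d - size J) B F ltac:(lia).
  exists C; split; first by rewrite /inP C1 C2 sB cB subnKC ?eqxx //; case/andP: Hd.
  by apply/(key C); rewrite ?C1.
- move=> C1 C2 /inPE [H11 H12] /inPE [H21 H22] S1 S2.
  apply: (@fw_uniq C1 C2 0); last by rewrite H12 H22.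
  by rewrite ((key C1 H11).1 S1) ((key C2 H21).1 S2).
Qed.
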